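(* Let $d\in\mathbb{N}$ with $d\ge 2$ and $0<\eta<1/d$. Then $E_+(1+1/\eta)\subseteq \mathcal{D}(\eta)^c\setminus K_d^c$.
   Context: For $\boldsymbol{x}\in\mathbb{R}^d$, $|\boldsymbol{x}|=\max_i|x_i|$; $\|x\|$ denotes distance from $x\in\mathbb{R}$ to the nearest integer, and for vectors $\|\boldsymbol{x}\|=\min_{\boldsymbol{p}\in\mathbb{Z}^d}|\boldsymbol{x}-\boldsymbol{p}|$. $\boldsymbol{r}\boldsymbol{\alpha}$ is the standard inner product. For $\boldsymbol{\alpha}\in\mathbb{R}^d$, $\mathcal{A}_\eta(\boldsymbol{\alpha})$ is the set of accumulation points of $\{|q|^{\eta}(q\boldsymbol{\alpha}-\boldsymbol{p}):q\in\mathbb{Z}\setminus\{0\},\ \boldsymbol{p}\in\mathbb{Z}^d\}$, $\mathcal{D}(\eta)=\{\boldsymbol{\alpha}:\mathcal{A}_\eta(\boldsymbol{\alpha})=\mathbb{R}^d\}$, $\mathcal{D}(\eta)^c=\mathbb{R}^d\setminus\mathcal{D}(\eta)$. $K_d$ is the set of $\boldsymbol{\alpha}\in\mathbb{R}^d$ with $1,\alpha_1,\dots,\alpha_d$ linearly independent over $\mathbb{Q}$, $K_d^c=\mathbb{R}^d\setminus K_d$. For $\omega\ge d$, \[E_+(\omega)=\left\{\boldsymbol{\alpha}\in K_d:\lim_{R\to\infty}R^\omega\min\{\|\boldsymbol{r}\boldsymbol{\alpha}\|:\boldsymbol{r}\in\mathbb{Z}^d\setminus\{\boldsymbol{0}\},\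 0\le r_1,\ldots,r_d\le R\}=0\right\}.\] *)

(* Defs.v *)
From HB Require Import structures.
From mathcomp Require Import all_boot all_order all_algebra.
From mathcomp Require Import all_classical all_reals all_analysis.
Set Implicit Arguments. Unset Strict Implicit. Unset Printing Implicit Defensive.
Import Order.TTheory GRing.Theory Num.Theory.
Local Open Scope ring_scope.
Local Open Scope classical_set_scope.

Section Defs.
Variable R : realType.
Variable d : nat.

Definition vec := 'I_d -> R.

Definition supnorm (x : vec) : R := \big[Num.max/0]_(i < d) `|x i|.

Definition distZ (x : R) : R :=
  Num.min (x - (Num.floor x)%:~R) ((Num.floor x + 1)%:~R - x).

Definition scaled_pt (eta : R) (alpha : vec) (q : int) (p : 'I_d -> int) : vec :=
  fun i => (`|q|%:~R) `^ eta * (q%:~R * alpha i - (p i)%:~R).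

(* A_eta(alpha): accumulation points of the set
   { |q|^eta (q alpha - p) : q in Z \ {0}, p in Z^d } *)
Definition Aeta (eta : R) (alpha : vec) : set vec :=
  [set y | forall eps : R, 0 < eps ->
     exists (q : int) (p : 'I_d -> int),
       q != 0 /\ scaled_pt eta alpha q p != y /\
       supnorm (fun i => scaled_pt eta alpha q p i - y i) < eps].

Definition Dset (eta : R) : set vec := [set alpha | Aeta eta alpha = setT].

Definition Kset : set vec :=
  [set alpha | forall (c0 : rat) (c : 'I_d -> rat),
     ratr c0 + \sum_(i < d) ratr (c i) * alpha i = 0 ->
     c0 = 0 /\ forall i, c i = 0].

(* min { ||r alpha|| : r in Z^d \ {0}, 0 <= r_i <= N }  (N : nat);
   the default value 1 is never reached when N >= 1 since ||.|| <= 1/2 *)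
Definition minbox (alpha : vec) (N : nat) : R :=
  \big[Num.min/1]_(r : {ffun 'I_d -> 'I_N.+1} | [exists i, val (r i) != 0%N])
     distZ (\sum_(i < d) (val (r i))%:R * alpha i).

(* E_+(omega): alpha in K_d with  R^omega * min{...} -> 0  as real R -> +oo
   (for real R >= 0, 0 <= r_i <= R with r_i integer iff r_i <= floor R) *)
Definition Eplus (omega : R) : set vec :=
  [set alpha | Kset alpha /\
     (x `^ omega * minbox alpha `|Num.floor x|%N : R) @[x --> +oo]
       --> 0%R].

End Defs.

(* Main.v *)
Require Import Defs.
From HB Require Import structures.
From mathcomp Require Import all_boot all_order all_algebra.
From mathcomp Require Import all_classical all_reals all_analysis.
From mathcomp Require Import ring lra zify.
Import Order.TTheory GRing.Theory Num.Theory.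
Local Open Scope ring_scope.
Local Open Scope classical_set_scope.
Set Implicit Arguments. Unset Strict Implicit. Unset Printing Implicit Defensive.

Section Helpers.
Variable R : realType.

Lemma intr1R : (1%:~R : R) = 1. Proof. by []. Qed.

Lemma distZ_le (t : R) (k : int) : distZ t <= `|t - k%:~R|.
Proof.
rewrite /distZ.
have /andP[hf1 hf2] := floor_itv t.
rewrite intrD /= ?intr1R in hf2.
have [kf|fk] := lerP k (Num.floor t).
- rewrite ge_min; apply/orP; left.
  have : k%:~R <= (Num.floor t)%:~R :> R by rewrite ler_int.
  rewrite ler_normr; move=> h; apply/orP; left; lra.
- rewrite ge_min; apply/orP; right.
  have : Num.floor t + 1 <= k by lia.
  rewrite -(ler_int R) intrD /= ?intr1R => h.
  rewrite ler_normr; apply/orP; right; lra.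
Qed.

Lemma distZ_ge0 (t : R) : 0 <= distZ t.
Proof.
rewrite /distZ; have /andP[hf1 hf2] := floor_itv t.
rewrite le_min; apply/andP; split; lra.
Qed.

Lemma distZ0 (t : R) : distZ t = 0 -> t = (Num.floor t)%:~R.
Proof.
rewrite /distZ; have /andP[hf1 hf2] := floor_itv t.
rewrite intrD /= ?intr1R in hf2 *.
have [h|h] := lerP (t - (Num.floor t)%:~R) ((Num.floor t)%:~R + 1 - t).
- move=> e; lra.
- move=> e; lra.
Qed.

Definition pd (t : R) : R := if distZ t == 0 then 1 else distZ t.

Lemma pd_gt0 t : 0 < pd t.
Proof.
rewrite /pd; case: eqP => h //; rewrite lt_def distZ_ge0 andbT; exact/eqP.
Qed.

Lemma pd_le t k : t != k%:~R -> pd t <= `|t - k%:~R|.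
Proof.
move=> htk; rewrite /pd; case: eqP => h; last exact: distZ_le.
have ht := distZ0 h.
have hfk : Num.floor t != k by apply/eqP => e; move: htk; rewrite {1}ht e eqxx.
rewrite ht ler_normr.
have [kf|fk] := ltrP k (Num.floor t).
- have : k + 1 <= Num.floor t by lia.
  rewrite -(ler_int R) intrD /= ?intr1R => e; apply/orP; left; lra.
- have : Num.floor t + 1 <= k by lia.
  rewrite -(ler_int R) intrD /= ?intr1R => e; apply/orP; right; lra.
Qed.

Lemma supnorm_ge d (v : vec R d) i : `|v i| <= supnorm v.
Proof. by rewrite /supnorm (bigD1 i) //= le_max lexx. Qed.

Lemma bigmin_le (I : finType) (P : pred I) (F : I -> R) i :
  P i -> \big[Num.min/1]_(j | P j) F j <= F i.
Proof. by move=> Pi; rewrite (bigD1 i) //= ge_min lexx. Qed.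

Lemma bigmin_gt0 (I : finType) (P : pred I) (F : I -> R) :
  (forall i, P i -> 0 < F i) -> 0 < \big[Num.min/1]_(j | P j) F j.
Proof.
move=> h; apply: (big_ind (fun x => 0 < x)) => //.
by move=> x y hx hy; rewrite lt_min hx hy.
Qed.

Lemma bigmin_ex (I : finType) (P : pred I) (F : I -> R) b :
  b <= 1 -> \big[Num.min/1]_(j | P j) F j < b -> exists i, P i /\ F i < b.
Proof.
move=> b1 hlt; apply: contrapT => hn.
have : b <= \big[Num.min/1]_(j | P j) F j.
  apply: (big_ind (fun x => b <= x)) => //; first by move=> x y hx hy; rewrite le_min hx hy.
  move=> i Pi; rewrite leNgt; apply/negP => hi; apply: hn; by exists i.
by rewrite leNgt hlt.
Qed.

End Helpers.

Section Small.
Variables (R : realType) (d : nat) (alpha : vec R d) (eta : R).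

Definition tq (q : int) (i : 'I_d) : R :=
  q%:~R * alpha i - 1 / ((`|q|%:~R) `^ eta).
Definition gq (q : int) : R := \big[Num.min/1]_(i < d) pd (tq q i).
Definition esmall (Q : nat) : R :=
  \big[Num.min/1]_(k < Q) Num.min (gq (Posz k.+1)) (gq (- Posz k.+1)).

Lemma esmall_gt0 Q : 0 < esmall Q.
Proof.
apply: bigmin_gt0 => k _; rewrite lt_min; apply/andP; split;
  apply: bigmin_gt0 => i _; exact: pd_gt0.
Qed.

Lemma esmall_le Q (q : int) i : q != 0 -> (`|q|%N <= Q)%N -> esmall Q <= pd (tq q i).
Proof.
case: q => [[|n]|n] //= _ hQ.
- rewrite /esmall; apply: le_trans; first exact: (bigmin_le _ (i:=Ordinal hQ)).
  rewrite /=.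
  rewrite ge_min; apply/orP; left; exact: (bigmin_le _ (i:=i)).
- rewrite /esmall; apply: le_trans; first exact: (bigmin_le _ (i:=Ordinal hQ)).
  rewrite /=.
  rewrite ge_min; apply/orP; right; rewrite NegzE; exact: (bigmin_le _ (i:=i)).
Qed.
End Small.

Section Arith.
Variable R : realType.
Implicit Types x y z s A B : R.

Lemma near_int (t : R) : exists n : int, `|t - n%:~R| <= distZ t.
Proof.
rewrite /distZ; have /andP[hf1 hf2] := floor_itv t.
rewrite intrD /= intr1R in hf2 *.
have [h|h] := lerP (t - (Num.floor t)%:~R) ((Num.floor t)%:~R + 1 - t).
- exists (Num.floor t); rewrite ler_norml; apply/andP; split; lra.
- exists (Num.floor t + 1); rewrite intrD /= intr1R ler_norml; apply/andP; split; lra.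
Qed.

Lemma aux_hu x e : `|x - 1| < e -> e <= 1/2 -> 1/2 < x < 3/2.
Proof. rewrite ltr_norml => /andP[h1 h2] he; apply/andP; split; lra. Qed.

Lemma aux_half A : 1 <= A -> 1/2 <= A * (1/2).
Proof. move=> h; lra. Qed.

Lemma aux_hdx x y s : x * (2 * y) = s -> y * x = s / 2.
Proof. by move=> <-; field. Qed.

Lemma aux_34 s : s / 2 * (3 / 2) <= 3/4 * s.
Proof. lra. Qed.

Lemma aux_etaom x : 0 < x -> x * (1 + 1 / x) = x + 1.
Proof. move=> h; field; lra. Qed.

Lemma aux_m0 A B : 1/2 <= A -> B < 1/4 -> 0 < A - B.
Proof. move=> h1 h2; lra. Qed.

Lemma aux_m1 A B s : A <= 3/4 * s -> -(1/4) < B -> 1 <= s -> A - B < s.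
Proof. move=> h1 h2 h3; lra. Qed.

Lemma aux_inv x : 0 < x -> 1 / x * x = 1.
Proof. move=> h; field; lra. Qed.

End Arith.

Unset Implicit Arguments.

Theorem lemma7 (R : realType) (d : nat) (eta : R) :
  (2 <= d)%N -> 0 < eta -> eta < 1 / d%:R ->
  @Eplus R d (1 + 1 / eta) `<=` (~` @Dset R d eta) `\` (~` @Kset R d).
Proof.
move=> d2 eta0 _ alpha [Kal Hlim]; split; last by move=> /(_ Kal).
move=> HD.
set om := 1 + 1 / eta.
have om1 : 1 <= om by rewrite /om lerDl divr_ge0 // ltW.
have dR : 2 <= d%:R :> R by rewrite (ler_nat R 2 d).
set c : R := 2 * d%:R.
have c1 : 1 <= c by rewrite /c; lra.
have c0 : 0 < c by lra.
have com1 : 1 <= c `^ om by rewrite -(powRr0 c); apply: ler_powR => //; lra.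
set th : R := 1 / (4 * c `^ om).
have th0 : 0 < th by rewrite /th divr_gt0 //; lra.
have th1 : th <= 1 by rewrite /th ler_pdivrMr; lra.
have := cvgr0_norm_lt _ Hlim _ th0.
case=> M [_ HM].
set M1 := Num.max M 1.
have M1M : M <= M1 by rewrite le_max lexx.
have M11 : 1 <= M1 by rewrite le_max lexx orbT.
set K := c * M1.
have K0 : 0 < K by rewrite /K; nra.
set Q0 := K `^ (1 / eta).
set Qn := `|Num.floor Q0|%N.
set e := Num.min (1/2) (esmall alpha eta Qn).
have e0 : 0 < e by rewrite lt_min esmall_gt0 andbT; lra.
have e12 : e <= 1/2 by rewrite ge_min lexx.
pose y := fun _ : 'I_d => 1 : R.
have : Aeta eta alpha y by rewrite HD.
move=> /(_ e e0) [q [p [q0 [hne hlt]]]].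
set a : R := (`|q|%:~R).
have a1 : 1 <= a.
  have : 1 <= `|q| by rewrite -gtz0_ge1 normr_gt0.
  by rewrite -(ler_int R).
set s := a `^ eta.
have s1 : 1 <= s by rewrite /s -(powRr0 a); apply: ler_powR => //; exact: ltW.
have s0 : 0 < s by exact: lt_le_trans ltr01 s1.
have a0 : 0 < a by exact: lt_le_trans ltr01 a1.
have hb i : `|s * (q%:~R * alpha i - (p i)%:~R) - 1| < e.
  exact: le_lt_trans (supnorm_ge (fun i => scaled_pt eta alpha q p i - y i) i) hlt.
case: (leqP `|q|%N Qn) => hq.
-
  have [i hi] : exists i, scaled_pt eta alpha q p i != y i.
    apply: contrapT => hn; move/eqP: hne; apply; apply: funext => i.
    apply: contrapT => h; apply: hn; exists i; exact/eqP.
  have hi' : s * (q%:~R * alpha i - (p i)%:~R) != 1 by [].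
  have hbi := hb i.
  set t := tq alpha eta q i.
  have Et : s * (q%:~R * alpha i - (p i)%:~R) - 1 = s * (t - (p i)%:~R).
    rewrite /t /tq -/a -/s; field; lra.
  have htp : t != (p i)%:~R.
    apply/eqP => htp; move: hi'; rewrite -subr_eq0 Et htp subrr mulr0 eqxx //.
  have h1 := pd_le htp.
  have h2 := esmall_le alpha eta i q0 hq.
  rewrite Et normrM (ger0_norm (ltW s0)) in hbi.
  have h3 : 0 <= `|t - (p i)%:~R| by [].
  have : esmall alpha eta Qn < esmall alpha eta Qn.
    apply: le_lt_trans h2 _; apply: le_lt_trans h1 _.
    apply: le_lt_trans _ (lt_le_trans hbi _); last by rewrite /e ge_min lexx orbT.
    nra.
  by rewrite ltxx.
-
  have Q00 : 0 <= Q0 by exact: powR_ge0.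
  have hQn : (Posz Qn) = Num.floor Q0 by rewrite /Qn gez0_abs // floor_ge0.
  have aQ : Q0 < a.
    have h1 := floorD1_gt Q0.
    rewrite -hQn intrD /= in h1.
    have h2 : (Qn.+1)%:R <= a.
      by rewrite /a -abszE ler_nat.
    rewrite -natr1 in h2. have : (Posz Qn)%:~R = Qn%:R :> R by [].
    move=> e1; rewrite e1 in h1; exact: lt_le_trans h1 h2.
  have sK : K < s.
    have -> : K = Q0 `^ eta.
      rewrite /Q0 -powRrM.
      rewrite aux_inv //.
      by rewrite powRr1 // ltW.
    by apply: gt0_ltr_powR => //; rewrite nnegrE //; exact: ltW.
  set X := s / c.
  have Xc : X * c = s by rewrite /X mulfVK // lt0r_neq0.
  have XM1 : M1 < X by rewrite /X ltr_pdivlMr // mulrC.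
  have X1 : 1 <= X by exact: ltW (le_lt_trans M11 XM1).
  have X0 : 0 <= X by exact: le_trans ler01 X1.
  have hX := HM X (le_lt_trans M1M XM1).
  set N := `|Num.floor X|%N in hX.
  set mb := minbox alpha N in hX.
  have om0 : 0 <= om by exact: le_trans ler01 om1.
  have Xom1 : 1 <= X `^ om by rewrite -(powRr0 X); apply: ler_powR.
  have XO : 0 < X `^ om by exact: lt_le_trans ltr01 Xom1.
  set b := th / X `^ om.
  have mbb : mb < b.
    rewrite /b ltr_pdivlMr //.
    rewrite mulrC; exact: le_lt_trans (ler_norm _) hX.
  have b1 : b <= 1.
    rewrite /b ler_pdivrMr // mul1r; exact: le_trans th1 Xom1.
  have [r [rnz hr]] := bigmin_ex b1 mbb.
  set tr := \sum_(i < d) _ in hr.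
  have [n hn] := near_int tr.
  set del := tr - n%:~R.
  have hdel : `|del| < b by exact: le_lt_trans hn hr.
  pose ri i : R := (val (r i))%:R.
  have ri0 i : 0 <= ri i by rewrite /ri ler0n.
  have riN i : ri i <= X.
    have : (val (r i) <= N)%N by rewrite -ltnS ltn_ord.
    rewrite -(ler_nat R) => h; apply: le_trans h _.
    have eN : (Posz N) = Num.floor X by rewrite /N gez0_abs // floor_ge0.
    have -> : N%:R = (Num.floor X)%:~R :> R by rewrite -eN.
    exact: floor_le.
  have hu i : 1/2 < s * (q%:~R * alpha i - (p i)%:~R) < 3/2.
    exact: aux_hu (hb i) e12.
  set SS := \sum_(i < d) ri i * (q%:~R * alpha i - (p i)%:~R).
  have sSS : s * SS = \sum_(i < d) ri i * (s * (q%:~R * alpha i - (p i)%:~R)).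
    by rewrite /SS mulr_sumr; apply: eq_bigr => i _; ring.
  have sumri : 1 <= \sum_(i < d) ri i.
    have [j hj] := existsP rnz.
    rewrite (bigD1 j) //=.
    have : 1 <= ri j by rewrite /ri (ler_nat R 1) lt0n.
    have : 0 <= \sum_(i < d | i != j) ri i by apply: sumr_ge0 => i _.
    move=> h0 h1; apply: le_trans h1 _; rewrite lerDl //.
  have lo : 1/2 <= s * SS.
    rewrite sSS; apply: (@le_trans _ _ (\sum_(i<d) ri i * (1/2))).
      rewrite -mulr_suml; exact: aux_half.
    apply: ler_sum => i _; have /andP[u1 u2] := hu i.
    apply: ler_wpM2l => //; exact: ltW.
  have hi : s * SS <= 3/4 * s.
    rewrite sSS; apply: (@le_trans _ _ (\sum_(i<d) X * (3/2))).
      apply: ler_sum => i _; have /andP[u1 u2] := hu i.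
      apply: le_trans (ler_wpM2l (ri0 i) (ltW u2)) _; apply: ler_wpM2r => //.
    rewrite sumr_const card_ord -[_ *+ d]mulr_natl.
    have hdx : d%:R * X = s / 2 by apply: aux_hdx.
    rewrite mulrA hdx; exact: aux_34.
  have key : X `^ om * c `^ om = s * a.
    rewrite -powRM; [|exact: X0|exact: ltW]. rewrite Xc.
    rewrite /s -powRrM.
    have -> : eta * om = eta + 1 by rewrite /om aux_etaom.
    rewrite powRD; last by apply/implyP => _; rewrite lt0r_neq0.
    by rewrite powRr1 // ltW.
  have sab : s * a * b = 1/4.
    rewrite /b /th -key. field.
    by rewrite !lt0r_neq0 // (lt_le_trans ltr01 com1).
  have hqd : `|s * (q%:~R * del)| < 1/4.
    rewrite normrM normrM (ger0_norm (ltW s0)) -intr_norm -/a.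
    have h1 : a * `|del| < a * b by rewrite ltr_pM2l.
    have h2 : s * (a * `|del|) < s * (a * b) by rewrite ltr_pM2l.
    by apply: lt_le_trans h2 _; rewrite mulrA sab lexx.
  set m : int := q * n - \sum_(i < d) (Posz (val (r i))) * p i.
  have E1 : SS = q%:~R * tr - \sum_(i < d) ri i * (p i)%:~R.
    rewrite /SS /tr mulr_sumr -sumrB; apply: eq_bigr => i _; rewrite /ri; ring.
  have Em : m%:~R = SS - q%:~R * del.
    rewrite /m intrB intrM rmorph_sum /=.
    have -> : \sum_(i < d) ((Posz (val (r i))) * p i)%:~R = \sum_(i<d) ri i * (p i)%:~R :> R.
      by apply: eq_bigr => i _; rewrite intrM.
    rewrite E1 /del; ring.
  have sm : s * m%:~R = s * SS - s * (q%:~R * del) by rewrite Em; ring.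
  move: hqd; rewrite ltr_norml => /andP[hq1 hq2].
  have m0 : 0 < m%:~R :> R by rewrite -(pmulr_rgt0 _ s0) sm; exact: aux_m0.
  have m1 : m%:~R < 1 :> R by rewrite -(ltr_pM2l s0) mulr1 sm; exact: aux_m1.
  have h0 : 0 < m by rewrite -(ltr_int R).
  have h1 : m < 1 by rewrite -(ltr_int R).
  by move: h1; rewrite -(add0r 1) ltzD1 leNgt h0.
Qed.
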